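(* Let $\mathcal{G}=(V,L)$ be a finite connected undirected graph with monitor set $M$ and non-monitor set $N=V\setminus M$, and let the measurement paths be given by Controllable Arbitrary-path Probing (CAP). Then for every non-monitor $v\in N$, the maximum identifiability index of $v$ under CAP is $\Omega_{\mathrm{CAP}}(v)=\Gamma_{\mathcal{G}^*}(v,m')$, i.e., $|C_{\mathcal{G}^*}(v,m')|$.
   Context: Failure model: a failure set is any $F\subseteq N$; a path fails iff it traverses a node of $F$. $P_F$ is the set of measurement paths traversing a node of $F$; $F_1,F_2$ distinguishable iff $P_{F_1}\ne P_{F_2}$. $S\subseteq N$ is $k$-identifiable if any two failure sets $F_1,F_2$ with $|F_1|,|F_2|\le k$ and $F_1\cap S\ne F_2\cap S$ are distinguishable (every set is trivially $0$-identifiable). A node $v$ is $k$-identifiable if $\{v\}$ is; $\Omega(v)$ is the maximum $k\in\{0,1,\dots,|N|\}$ such that $v$ is $k$-identifiable. Under CAP, the measurement paths are all walks in $\mathcal{G}$ (repeated nodes/links allowed) starting and ending at monitors (possibly the same). $\mathcal{N}(M)$ is the set of non-monitors adjacent to some monitor. $\mathcal{G}^*$ is obtained from $\mathcal{G}$ by deleting all monitors, adding a virtual node $m'$, and linking $m'$ to every node of $\mathcal{N}(M)$. For nodes $s,t$ of a graph $\mathcal{H}$, $C_{\mathcal{H}}(s,t)$ is a minimum-cardinality set of nodes (other than $s,t$) whose deletion destroys all $s$–$t$ paths; if $s,t$ are adjacent, $C_{\mathcal{H}}(s,t):=V(\mathcal{H})\setminus\{t\}$. *)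

(* Defs.v *)
(* Graph = symmetric irreflexive relation e on a finType T. *)
From mathcomp Require Import all_boot.
Set Implicit Arguments. Unset Strict Implicit. Unset Printing Implicit Defensive.

Section CAP.
Variables (T : finType) (e : rel T) (M : {set T}).

(* CAP measurement path: a walk x :: s (repetitions allowed) in G
   starting and ending at monitors. *)
Definition cap_walk (x : T) (s : seq T) : bool :=
  [&& path e x s, x \in M & last x s \in M].

(* the walk x :: s traverses a node of F (i.e. fails under failure set F) *)
Definition traverses (F : {set T}) (x : T) (s : seq T) : bool :=
  has (fun y => y \in F) (x :: s).

(* P_{F1} <> P_{F2}: some measurement path is in exactly one of them *)
Definition distinguishable (F1 F2 : {set T}) : Prop :=
  exists x s, cap_walk x s /\ traverses F1 x s <> traverses F2 x s.

Definition k_identifiable (S : {set T}) (k : nat) : Prop :=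
  forall F1 F2 : {set T}, F1 \subset ~: M -> F2 \subset ~: M ->
    #|F1| <= k -> #|F2| <= k -> F1 :&: S != F2 :&: S ->
    distinguishable F1 F2.

Definition is_Omega (v : T) (n : nat) : Prop :=
  [/\ n <= #|~: M|, k_identifiable [set v] n &
      forall k, k <= #|~: M| -> k_identifiable [set v] k -> k <= n].

(* G*: node None is the virtual node m', Some x for x a non-monitor. *)
Definition nbrM (x : T) : bool := (x \notin M) && [exists m in M, e x m].

Definition star_edge : rel (option T) := fun a b =>
  match a, b with
  | Some x, Some y => [&& x \notin M, y \notin M & e x y]
  | None, Some y => nbrM y
  | Some x, None => nbrM x
  | None, None => false
  end.

Definition star_nodes : {set option T} := None |: [set Some x | x in ~: M].

Definition is_cut (s t : option T) (C : {set option T}) : bool :=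
  (C \subset star_nodes :\: [set s; t]) &&
  ~~ connect (fun a b => [&& star_edge a b, a \notin C & b \notin C]) s t.

Definition Gamma_star (s t : option T) : nat :=
  if star_edge s t then #|star_nodes :\ t|
  else \big[minn/#|star_nodes|]_(C : {set option T} | is_cut s t C) #|C|.

End CAP.

(* Main.v *)
Require Import Defs.
From mathcomp Require Import all_boot zify.
Set Implicit Arguments. Unset Strict Implicit. Unset Printing Implicit Defensive.

Lemma path_all (X : eqType) (r : rel X) (P : X -> Prop) (Q : pred X) x s :
  P x -> path r x s -> all Q s -> (forall a b, P a -> r a b -> Q b -> P b) ->
  forall y, y \in x :: s -> P y.
Proof.
move=> Px pth aQ step; elim: s x Px pth aQ => [|z s IH] x Px /=.
  by move=> _ _ y; rewrite inE => /eqP ->.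
case/andP=> rxz pth /andP[Qz aQ] y; rewrite inE => /orP[/eqP -> //|].
exact: IH (step _ _ Px rxz Qz) pth aQ y.
Qed.

Lemma bigmin_le_seq (I : eqType) (r : seq I) (P : pred I) (F : I -> nat) s i :
  i \in r -> P i -> \big[minn/s]_(j <- r | P j) F j <= F i.
Proof.
elim: r => //= j r IH; rewrite inE big_cons => /orP[/eqP <-|ir] Pi.
  by rewrite Pi geq_minl.
case: ifP => _; last exact: IH.
exact: leq_trans (geq_minr _ _) (IH ir Pi).
Qed.

Lemma bigmin_attain (I : finType) (P : pred I) (F : I -> nat) s i :
  P i -> F i < s -> exists j, P j /\ \big[minn/s]_(j | P j) F j = F j.
Proof.
move=> Pi lt.
have le := bigmin_le_seq F s (mem_index_enum i) Pi.
have : (s <= \big[minn/s]_(j | P j) F j) || [exists j, P j && (\big[minn/s]_(j | P j) F j == F j)].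
  set b := \big[minn/s]_(j | P j) F j.
  have : (s <= b) || [exists j, P j && (b == F j)].
    rewrite /b; apply: (big_ind (fun z => (s <= z) || [exists j, P j && (z == F j)])).
    - by rewrite leqnn.
    - move=> x y Kx Ky; rewrite /minn; by case: ifP.
    - by move=> j Pj; apply/orP; right; apply/existsP; exists j; rewrite Pj eqxx.
  by [].
case/orP => [h|/existsP[j /andP[Pj /eqP E]]]; last by exists j; split.
by have := leq_trans h le; rewrite leqNgt lt.
Qed.

Section S.
Variables (T : finType) (e : rel T) (M : {set T}).
Hypotheses (esym : symmetric e) (eirr : irreflexive e).

Definition okF (F : {set T}) (a : option T) := if a is Some x then x \notin F else true.
Definition avF F : rel (option T) := fun a b => [&& star_edge e M a b, okF F a & okF F b].

Lemma star_sym : symmetric (star_edge e M).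
Proof. by case=> [x|] [y|] //=; rewrite esym andbCA. Qed.

Lemma avF_sym (F : {set T}) : symmetric (avF F).
Proof. by move=> a b; rewrite /avF star_sym (andbC (okF F a)). Qed.

Lemma ok_reach (F : {set T}) a : connect (avF F) None a -> okF F a.
Proof.
case/connectP => p pth ->.
apply: (path_all (P := fun a => okF F a) (Q := predT)) pth _ _ _ (mem_last _ _) => //.
  exact: all_predT.
by move=> x y _ /and3P[].
Qed.

Lemma reach_walk (F : {set T}) (w : T) : F \subset ~: M -> connect (avF F) None (Some w) ->
  exists x s, [/\ cap_walk e M x s, w \in x :: s & all (fun y => y \notin F) (x :: s)].
Proof.
move=> sub /connectP[p pth lp].
pose P (a : option T) := if a is Some y then exists m s, [/\ m \in M, path e m s,
   last m s = y & all (fun z => z \notin F) (m :: s)] else True.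
have mF m : m \in M -> m \notin F.
  by move=> mM; apply/negP => mF; have := subsetP sub m mF; rewrite inE mM.
have : P (Some w).
  rewrite lp; apply: (path_all (P := P) (Q := predT)) pth _ _ _ (mem_last _ _) => //.
    exact: all_predT.
  case=> [x|] [y|] //=.
  - case=> m [s [mM pth' ls al]] /and3P[/and3P[xM yM exy] xF yF] _.
    exists m, (rcons s y); split => //.
      by rewrite rcons_path pth' ls.
      by rewrite last_rcons.
    by move: al => /= /andP[-> al] /=; rewrite all_rcons al andbT.
  - move=> _ /and3P[/andP[yM /existsP[m /andP[mM eym]]] _ yF] _.
    exists m, [:: y]; split => //=; first by rewrite esym eym.
    by move: yF => /= ->; rewrite mF.
case=> m [s [mM pth' ls al]].
exists m, (s ++ rev (belast m s)); split.
- rewrite /cap_walk cat_path pth' rev_path mM /=.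
  have -> : path (fun z => e^~ z) m s = path e m s.
    by apply: eq_path => a b; rewrite esym.
  rewrite pth' last_cat.
  by case: (s) => //= y s'; rewrite rev_cons last_rcons.
- by rewrite -cat_cons mem_cat -ls mem_last.
- rewrite -cat_cons all_cat al /= all_rev.
  by move: al; rewrite lastI all_rcons => /andP[].
Qed.

Lemma walk_reach (F : {set T}) (x : T) (s : seq T) (v : T) : cap_walk e M x s -> all (fun y => y \notin F) (x :: s) ->
  v \in x :: s -> v \notin M -> connect (avF F) None (Some v).
Proof.
case/and3P=> pth xM _ /= /andP[xF al] vin vM.
pose P (a : T) := (a \in M) || ((a \notin F) && connect (avF F) None (Some a)).
have : P v.
  apply: (path_all (P := P) (Q := fun y => y \notin F)) pth al _ _ vin.
    by rewrite /P xM.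
  move=> a b Pa eab bF; rewrite /P; case: (boolP (b \in M)) => //= bM.
  rewrite bF /=; case: (boolP (a \in M)) => aM.
    apply: connect1; rewrite /avF /= /nbrM bM bF /= andbT.
    by apply/existsP; exists a; rewrite aM esym.
  move: Pa; rewrite /P (negbTE aM) /= => /andP[aF Ha].
  apply: connect_trans Ha (connect1 _).
  by rewrite /avF /= aF bF bM eab aM.
by rewrite /P (negbTE vM) => /andP[].
Qed.

Lemma star_nodesD : star_nodes M :\ None = [set Some x | x in ~: M].
Proof. by rewrite /star_nodes setU1K //; apply/imsetP => -[x _]. Qed.

Lemma card_starD : #|star_nodes M :\ None| = #|~: M|.
Proof. by rewrite star_nodesD card_imset //; exact: Some_inj. Qed.

Lemma card_star : #|star_nodes M| = #|~: M|.+1.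
Proof. by rewrite (cardsD1 None) card_starD /star_nodes setU11. Qed.

Lemma neq_v (F1 F2 : {set T}) v : F1 :&: [set v] != F2 :&: [set v] -> (v \in F1) != (v \in F2).
Proof.
apply: contra => /eqP E; apply/eqP/setP => x; rewrite !inE.
by case: eqP => [->|]; rewrite ?E ?andbF.
Qed.

Lemma key (v : T) (c : nat) (A B : {set T}) :
  (forall C, is_cut e M (Some v) None C -> c <= #|C|) ->
  A \subset ~: M -> B \subset ~: M -> #|A| <= c -> v \in A -> v \notin B ->
  exists x s, cap_walk e M x s /\ traverses A x s != traverses B x s.
Proof.
move=> cutle sA sB cA vA vB.
case: (boolP (connect (avF B) None (Some v))) => H2.
  have [x [s [cw vin al]]] := reach_walk sB H2.
  exists x, s; split => //.
  have -> : traverses A x s by apply/hasP; exists v.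
  have -> : traverses B x s = false by apply/negbTE; rewrite -all_predC; exact: al.
  done.
case: (pickP (fun w => (w \in B) && connect (avF A) None (Some w))) => [w /andP[wB Hw]|H1].
  have [x [s [cw win al]]] := reach_walk sA Hw.
  exists x, s; split => //.
  have -> : traverses B x s by apply/hasP; exists w.
  have -> : traverses A x s = false by apply/negbTE; rewrite -all_predC; exact: al.
  done.
exfalso.
pose C := [set Some x | x in A :\ v].
have okB a : connect (avF A) None a -> okF B a.
  case: a => [x|] //= Sx; apply/negP => xB; by have := H1 x; rewrite /= xB Sx.
have S12 a : connect (avF A) None a -> connect (avF B) None a.
  case/connectP => p pth ->.
  suff : connect (avF A) None (last None p) /\ connect (avF B) None (last None p) by case.
  apply: (path_all (P := fun a => connect (avF A) None a /\ connect (avF B) None a) (Q := predT)) pth _ _ _ (mem_last _ _).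
  - by split; apply: connect0.
  - exact: all_predT.
  move=> a' b [Sa S2a] ab _; have Sb := connect_trans Sa (connect1 ab); split => //.
  apply: connect_trans S2a (connect1 _).
  by case/and3P: ab => sab _ _; rewrite /avF sab (okB _ Sa) (okB _ Sb).
have notC a : (a \notin C) = okF (A :\ v) a.
  case: a => [x|] /=; first by rewrite (mem_imset _ _ (@Some_inj _)).
  by apply/negP => /imsetP[].
have cut : is_cut e M (Some v) None C.
  apply/andP; split.
    apply/subsetP => a /imsetP[x]; rewrite !inE => /andP[xv xA] ->.
    have xM := subsetP sA x xA.
    have -> : (Some x == Some v) = false by apply/eqP => -[E]; rewrite E eqxx in xv.
    by rewrite /= (mem_imset _ _ (@Some_inj _)) xM.
  apply/negP => con.
  have eqr : (fun a b => [&& star_edge e M a b, a \notin C & b \notin C]) =2 avF (A :\ v).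
    by move=> a b; rewrite /avF !notC.
  rewrite (eq_connect eqr) (sym_connect_sym (avF_sym _)) in con.
  case/connectP: con => p pth lp.
  have : connect (avF A) None (Some v) || connect (avF B) None (Some v).
    rewrite {1}lp; apply: (path_all (P := fun a => connect (avF A) None a || connect (avF B) None (Some v)) (Q := predT)) pth _ _ _ (mem_last _ _).
    - by rewrite connect0.
    - exact: all_predT.
    move=> a b /orP[Sa|->]; last by rewrite orbT.
    case/and3P=> ab oka okb _.
    case: (boolP (okF A b)) => okAb.
      by rewrite (connect_trans Sa (connect1 _)) // /avF ab (ok_reach Sa) okAb.
    apply/orP; right; apply: connect_trans (S12 _ Sa) (connect1 _).
    have bv : b = Some v.
      case: b ab okb okAb => [y|] //= ab okb /negPn yA.
      by move: okb; rewrite !inE yA andbT negbK => /eqP ->.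
    by rewrite bv in ab *; rewrite /avF ab (okB _ Sa) /= vB.
  by case/orP => [/S12 Hc | Hc]; rewrite Hc in H2.
have := cutle _ cut; rewrite card_imset; last exact: Some_inj.
have := cardsD1 v A; rewrite vA /=. lia.
Qed.

Lemma notid (v : T) (C : {set option T}) :
  is_cut e M (Some v) None C -> v \notin M ->
  ~ k_identifiable e M [set v] #|C|.+1.
Proof.
move=> /andP[sub ncon] vM kid.
pose F2 := [set x | Some x \in C].
have NC : None \notin C.
  by apply/negP => /(subsetP sub); rewrite !inE eqxx orbT.
have NvC : Some v \notin C.
  by apply/negP => /(subsetP sub); rewrite !inE eqxx.
have CF2 : C = [set Some x | x in F2].
  apply/setP => -[x|]; last first.
    by rewrite (negbTE NC); symmetry; apply/negbTE/negP => /imsetP[].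
  by rewrite (mem_imset _ _ (@Some_inj _)) inE.
have cF2 : #|C| = #|F2| by rewrite {1}CF2 card_imset //; exact: Some_inj.
have sF2 : F2 \subset ~: M.
  apply/subsetP => x; rewrite inE => /(subsetP sub); rewrite !inE.
  case/andP => _ /orP[/eqP//|]; by rewrite (mem_imset _ _ (@Some_inj _)) inE.
have vF2 : v \notin F2 by rewrite inE.
have [||||| x [s [cw dif]]] := kid (v |: F2) F2.
- by rewrite subUset sub1set inE vM sF2.
- exact: sF2.
- by rewrite cardsU1 vF2 cF2.
- by rewrite cF2.
- apply/negP => /eqP /setP /(_ v); rewrite !inE eqxx /=.
  by rewrite (negbTE NvC).
case hF2 : (traverses F2 x s).
  have h : traverses (v |: F2) x s by apply: sub_has hF2 => y yF; exact: setU1r.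
  by rewrite hF2 h in dif.
have dif' : traverses (v |: F2) x s by move: dif; rewrite hF2; case: (traverses _ _ _).
case/hasP: dif' => y yin; rewrite in_setU1 => /orP[/eqP yv|yF2]; last first.
  by move: hF2; rewrite /traverses => /negbT/hasPn/(_ y yin); rewrite yF2.
have al : all (fun y => y \notin F2) (x :: s).
  by apply/allP => z zin; apply: (hasPn (negbT hF2)).
rewrite yv in yin; have := walk_reach cw al yin vM.
have eqr : avF F2 =2 (fun a b => [&& star_edge e M a b, a \notin C & b \notin C]).
  move=> a b; rewrite /avF; congr [&& _, _ & _].
    by case: (a) => [z|] /=; rewrite ?inE ?NC.
  by case: (b) => [z|] /=; rewrite ?inE ?NC.
rewrite (sym_connect_sym (avF_sym _)) (eq_connect eqr) => h.
by rewrite h in ncon.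
Qed.

End S.

Theorem theorem4 (T : finType) (e : rel T) (M : {set T}) :
  symmetric e -> irreflexive e -> (forall x y : T, connect e x y) ->
  forall v : T, v \notin M ->
  is_Omega e M v (Gamma_star e M (Some v) None).
Proof.
move=> esym eirr _ v vM.
rewrite /Gamma_star /=.
case: ifP => adj.
  rewrite card_starD; split => // F1 F2 s1 s2 _ _ neq.
  case/andP: adj => _ /existsP [m /andP [mM evm]].
  have mF (F : {set T}) : F \subset ~: M -> m \notin F.
    by move=> sF; apply/negP => mF; have := subsetP sF m mF; rewrite inE mM.
  exists m, [:: v; m]; split.
    by rewrite /cap_walk /= esym evm mM.
  rewrite /traverses /= (negbTE (mF _ s1)) (negbTE (mF _ s2)) !orbF.
  exact/eqP/neq_v.
set c := \big[minn/_]_(C | _) _.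
pose C0 := star_nodes M :\: [set Some v; None].
have cut0 : is_cut e M (Some v) None C0.
  apply/andP; split => //.
  apply/negP => /connectP[[|a p] /= pth lp] //.
  case/andP: pth => /and3P[ea _ aC] _.
  case: a ea aC {lp} => [y|] /=; last by rewrite adj.
  case/and3P => _ yM evy; apply/negP; rewrite negbK !inE (inj_eq (@Some_inj _)) /=.
  have yv : (y == v) = false by apply/negbTE; apply: contraTN evy => /eqP ->; rewrite eirr.
  by rewrite yv /= (mem_imset _ _ (@Some_inj _)) inE yM.
have C0le : #|C0| <= #|~: M|.
  rewrite -card_starD; apply: subset_leq_card; apply/subsetP => a.
  by rewrite !inE negb_or => /andP[/andP[_ ->] ->].
have cutle C : is_cut e M (Some v) None C -> c <= #|C|.
  by move=> cC; apply: bigmin_le_seq => //; exact: mem_index_enum.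
have [Cs [cutS cE]] : exists C, is_cut e M (Some v) None C /\ c = #|C|.
  apply: (bigmin_attain (i := C0)) => //.
  by rewrite card_star ltnS.
split.
- exact: leq_trans (cutle _ cut0) C0le.
- move=> F1 F2 s1 s2 k1 k2 /neq_v.
  case: (boolP (v \in F1)) => v1; case: (boolP (v \in F2)) => v2 //= _.
    have [x [s [cw d]]] := key esym cutle s1 s2 k1 v1 v2.
    by exists x, s; split => // E; rewrite E eqxx in d.
  have [x [s [cw d]]] := key esym cutle s2 s1 k2 v2 v1.
  by exists x, s; split => // E; rewrite E eqxx in d.
- move=> k _ kid; rewrite leqNgt; apply/negP => ck.
  apply: (notid esym cutS vM) => F1 F2 s1 s2 k1 k2 neq.
  apply: kid => //; rewrite cE in ck.
    exact: leq_trans k1 ck.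
  exact: leq_trans k2 ck.
Qed.
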